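(* For all $s,k,i=1,\dots,n$, the contravariant Christoffel symbol $\Gamma^{si}_k(u)$ of $g$, written as a polynomial in the basic invariants $u_1,\dots,u_n$, depends at most linearly on $u_{n-1}$.
   Context: $n\ge2$. $g$ is the cometric $g^{ij}(p)=\frac{1-\delta^{ij}}{p_ip_j}$ on $\mathbb{C}^n$ (inverse metric $g_{ij}(p)=(\frac{1}{n-1}-\delta_{ij})p_ip_j$), invariant under $B_n$ acting by permutations and sign changes of coordinates. $u_m=\sum_{1\le i_1<\dots<i_m\le n}p_{i_1}^2\cdots p_{i_m}^2$ ($m=1,\dots,n$) are coordinates on the orbit space, $g^{ij}(u)=\sum_{k,l}g^{kl}(p)\frac{\partial u_i}{\partial p_k}\frac{\partial u_j}{\partial p_l}$, $\Gamma^j_{sk}(u)$ are the Christoffel symbols of the Levi-Civita connection of $g$ in these coordinates, and $\Gamma^{si}_k(u)=-\sum_j g^{sj}(u)\Gamma^i_{jk}(u)$, which are polynomials in $u$. *)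

(* Defs.v *)
From HB Require Import structures.
From mathcomp Require Import all_boot all_order all_algebra.
From mathcomp Require Import mpoly.
Set Implicit Arguments. Unset Strict Implicit. Unset Printing Implicit Defensive.
Import Order.TTheory GRing.Theory Num.Theory.
Local Open Scope ring_scope.

Section B_n_Christoffel.
Variables (C : numClosedFieldType) (n : nat).

(* basic invariant u_{m+1}, m : 'I_n  (0-indexed):
   u_m = sum_{i_1<...<i_m} p_{i_1}^2 ... p_{i_m}^2, as a polynomial in p *)
Definition uinv (m : 'I_n) : {mpoly C[n]} :=
  \sum_(h : {set 'I_n} | #|h| == m.+1) \prod_(i in h) 'X_i ^+ 2.

Definition gdown (a b : 'I_n) : {mpoly C[n]} :=
  ((n.-1)%:R^-1 - (a == b)%:R) *: ('X_a * 'X_b).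

Variable p : 'I_n -> C.

Definition gup (a b : 'I_n) : C := (1 - (a == b)%:R) / (p a * p b).

Definition GammaP (a b c : 'I_n) : C :=
  2^-1 * \sum_(l < n) gup a l *
    ((mderiv b (gdown l c)).@[p] + (mderiv c (gdown l b)).@[p]
     - (mderiv l (gdown b c)).@[p]).

(* Jacobian  J m a = d u_m / d p_a  and its inverse  (invmx J) a m = d p_a / d u_m *)
Definition jacU : 'M[C]_n := \matrix_(m, a) (mderiv a (uinv m)).@[p].
Definition dpdu (a m : 'I_n) : C := invmx jacU a m.

Definition gupU (s j : 'I_n) : C :=
  \sum_(a < n) \sum_(b < n) jacU s a * gup a b * jacU j b.

(* Christoffel symbols of the Levi-Civita connection in the u coordinates
   (transformation law of connection coefficients):
   Gamma^i_{jk}(u) = sum_{b,c} (sum_a du_i/dp_a Gamma^a_{bc}(p) - d^2u_i/dp_b dp_c)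
                      dp_b/du_j dp_c/du_k *)
Definition GammaU (i j k : 'I_n) : C :=
  \sum_(b < n) \sum_(c < n)
    ((\sum_(a < n) jacU i a * GammaP a b c) - (mderiv c (mderiv b (uinv i))).@[p])
    * dpdu b j * dpdu c k.

Definition GammaUcontra (s i k : 'I_n) : C :=
  - \sum_(j < n) gupU s j * GammaU i j k.

(* generic points: all p_i nonzero and u a local coordinate system at p *)
Definition generic_point : Prop := (forall a, p a != 0) /\ jacU \in unitmx.

End B_n_Christoffel.

Definition uval (C : numClosedFieldType) (n : nat) (p : 'I_n -> C) : 'I_n -> C :=
  fun m => (uinv C m).@[p].

(* Main.v *)
Require Import Defs.
From HB Require Import structures.
From mathcomp Require Import all_boot all_order all_algebra.
From mathcomp Require Import mpoly.
From mathcomp Require Import ring zify.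
Import Order.TTheory GRing.Theory Num.Theory.
Local Open Scope ring_scope.
Set Implicit Arguments. Unset Strict Implicit. Unset Printing Implicit Defensive.
Section ES.
Variables (C : numClosedFieldType) (n : nat).
Implicit Types (A h : {set 'I_n}) (x : 'I_n -> C).

Definition es x A k : C :=
  \sum_(h : {set 'I_n} | (h \subset A) && (#|h| == k)) \prod_(i in h) x i.

Lemma es0 x A : es x A 0 = 1.
Proof.
rewrite /es (big_pred1 set0) ?big_set0 // => h /=.
by rewrite cards_eq0 andbC; case: eqP => // ->; rewrite sub0set.
Qed.

Lemma es_big x A k : (#|A| < k)%N -> es x A k = 0.
Proof.
move=> hk; rewrite /es big_pred0 // => h; apply/negbTE/andP => -[/subset_leq_card h1 /eqP h2].
by move: (leq_ltn_trans h1 hk); rewrite h2 ltnn.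
Qed.

Lemma sum_setD1 A a (k : nat) (F : {set 'I_n} -> C) : a \in A ->
  \sum_(h : {set 'I_n} | (h \subset A) && (#|h| == k.+1) && (a \in h)) F h =
  \sum_(h : {set 'I_n} | (h \subset A :\ a) && (#|h| == k)) F (a |: h).
Proof.
move=> aA.
rewrite (reindex_onto (fun h => a |: h) (fun h => h :\ a)) /=; last first.
  by move=> h /andP[_ ah]; rewrite setD1K.
apply: eq_bigl => h; rewrite setU11 andbT.
case ah: (a \in h).
  have -> : a |: h = h by apply/setP=> y; rewrite in_setU1; case: eqP => // ->.
  have -> : (h :\ a == h) = false.
    by apply/negbTE/eqP => E; move: ah; rewrite -E setD11.
  by rewrite andbF subsetD1 ah !andbF.
rewrite setU1K ?ah // eqxx andbT subsetD1 ah andbT cardsU1 ah add1n eqSS.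
by rewrite subUset sub1set aA.
Qed.

Lemma esD1 x A a k : a \in A ->
  es x A k.+1 = es x (A :\ a) k.+1 + x a * es x (A :\ a) k.
Proof.
move=> aA; rewrite /es (bigID (fun h => a \in h)) /= addrC; congr (_ + _).
  by apply: eq_bigl => h; rewrite subsetD1 andbAC.
rewrite sum_setD1 // mulr_sumr; apply: eq_bigr => h /andP[hA _].
by rewrite big_setU1 //=; move: hA; rewrite subsetD1 => /andP[].
Qed.

Lemma esS x A k : \sum_(a in A) es x (A :\ a) k = (#|A| - k)%:R * es x A k.
Proof.
rewrite /es (exchange_big_dep (fun h => (h \subset A) && (#|h| == k))) /=; last first.
  by move=> a h aA; rewrite subsetD1 => /andP[/andP[]] -> _ ->.
rewrite mulr_sumr; apply: eq_bigr => h /andP[hA /eqP hk].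
rewrite (eq_bigl (fun a => a \in A :\: h)); last first.
  by move=> a; rewrite subsetD1 hA hk eqxx !andbT in_setD andbC.
rewrite sumr_const cardsD (setIidPr hA) hk.
by rewrite mulr_natl.
Qed.

End ES.

Section Deriv.
Variables (C : numClosedFieldType) (n : nat).
Implicit Types (A h : {set 'I_n}) (p : 'I_n -> C).

Definition sq p : 'I_n -> C := fun a => p a ^+ 2.

Lemma eval_prodX2 p h : (\prod_(i in h) 'X_i ^+ 2 : {mpoly C[n]}).@[p] = \prod_(i in h) sq p i.
Proof. by rewrite rmorph_prod; apply: eq_bigr => i _; rewrite rmorphXn /= mevalXU. Qed.

Lemma uval_es p (m : 'I_n) : uval p m = es (sq p) setT m.+1.
Proof.
rewrite /uval /uinv rmorph_sum /es; apply: eq_big => [h|h _]; first by rewrite subsetT.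
exact: eval_prodX2.
Qed.

Lemma mderivXi (a i : 'I_n) : mderiv a ('X_i : {mpoly C[n]}) = (i == a)%:R.
Proof.
rewrite mderivX mnm1E; case: eqP => [->|_]; last by rewrite scale0r.
have -> : (U_(a) - U_(a))%MM = 0%MM by apply/mnmP => j; rewrite mnmBE subnn mnm0E.
by rewrite mpolyX0 scale1r.
Qed.

Lemma mderiv_prod0 (a : 'I_n) h : a \notin h ->
  mderiv a (\prod_(i in h) 'X_i ^+ 2 : {mpoly C[n]}) = 0.
Proof.
move=> ah; elim/big_rec: _ => [|i q ih hq].
  by rewrite -[1]/(1%:MP) mderivC.
 rewrite mderivM hq mulr0 addr0 expr2 mderivM !mderivXi.
have -> : (i == a) = false by apply/negbTE; apply: contra ah => /eqP <-.
by rewrite mulr0 mul0r addr0 mul0r.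
Qed.

Lemma mderiv_prodX2 (a : 'I_n) h :
  mderiv a (\prod_(i in h) 'X_i ^+ 2 : {mpoly C[n]}) =
  if a \in h then 2%:R *: ('X_a * \prod_(i in h :\ a) 'X_i ^+ 2) else 0.
Proof.
case: ifP => ah; last by rewrite mderiv_prod0 // ah.
rewrite (big_setD1 a) //= mderivM mderiv_prod0 ?setD11 // mulr0 addr0.
by rewrite expr2 mderivM mderivXi eqxx mulr1 mul1r scaler_nat mulr2n mulrDl.
Qed.

Lemma d1poly (a m : 'I_n) : mderiv a (uinv C m) =
  \sum_(h : {set 'I_n} | #|h| == m.+1)
     (if a \in h then 2%:R *: ('X_a * \prod_(i in h :\ a) 'X_i ^+ 2) else 0).
Proof.
rewrite /uinv (big_morph (mderiv a) (@mderivD _ _ a) (@mderiv0 _ _ a)).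
by apply: eq_bigr => h _; rewrite mderiv_prodX2.
Qed.

Lemma shiftsum A (a : 'I_n) (k : nat) (G : {set 'I_n} -> C) : a \in A ->
  \sum_(h : {set 'I_n} | (h \subset A) && (#|h| == k.+1)) (if a \in h then G (h :\ a) else 0) =
  \sum_(h : {set 'I_n} | (h \subset A :\ a) && (#|h| == k)) G h.
Proof.
move=> aA; rewrite -big_mkcondr sum_setD1 //; apply: eq_bigr => h.
by rewrite subsetD1 => /andP[/andP[_ ah] _]; rewrite setU1K.
Qed.

Lemma shiftsumT (a : 'I_n) (k : nat) (G : {set 'I_n} -> C) :
  \sum_(h : {set 'I_n} | #|h| == k.+1) (if a \in h then G (h :\ a) else 0) =
  \sum_(h : {set 'I_n} | (h \subset [set~ a]) && (#|h| == k)) G h.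
Proof.
rewrite -setTD -(shiftsum _ _ (in_setT a)); apply: eq_bigl => h.
by rewrite subsetT.
Qed.

Lemma eval_d1 p (a m : 'I_n) : (mderiv a (uinv C m)).@[p] = 2 * p a * es (sq p) [set~ a] m.
Proof.
rewrite d1poly (big_morph (meval p) (mevalD p) (meval0 p)) /es mulr_sumr -shiftsumT; apply: eq_bigr => h _.
case: ifP => ah; last by rewrite meval0.
by rewrite mevalZ mevalM mevalXU eval_prodX2 mulrA.
Qed.

End Deriv.

Section Deriv2.
Variables (C : numClosedFieldType) (n : nat).
Implicit Types (A h : {set 'I_n}) (p : 'I_n -> C).

Definition esm1 (x : 'I_n -> C) A (k : nat) : C :=
  match k with 0 => 0 | k'.+1 => es x A k' end.

Lemma eval_d2 p (b c i : 'I_n) : (mderiv c (mderiv b (uinv C i))).@[p] =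
  if b == c then 2 * es (sq p) [set~ b] i
  else 4 * p b * p c * esm1 (sq p) ([set~ b] :\ c) i.
Proof.
rewrite d1poly (big_morph (mderiv c) (@mderivD _ _ c) (@mderiv0 _ _ c)).
rewrite (big_morph (meval p) (mevalD p) (meval0 p)).
case: eqP => [<-|/eqP nbc].
  rewrite /es mulr_sumr -shiftsumT; apply: eq_bigr => h _.
  case: ifP => bh; last by rewrite mderiv0 meval0.
  rewrite mderivZ mderivM mderiv_prod0 ?setD11 // mulr0 addr0 mderivXi eqxx mul1r.
  by rewrite mevalZ eval_prodX2.
rewrite (eq_bigr (fun h => if b \in h then
   (fun h' => if c \in h' then 4 * p b * p c * \prod_(j in h' :\ c) sq p j else 0) (h :\ b)
   else 0)); last first.
  move=> h _; case: ifP => bh; last by rewrite mderiv0 meval0.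
  rewrite mderivZ mderivM mderivXi (negbTE nbc) mul0r add0r mderiv_prodX2.
  case: ifP => ch; last by rewrite mulr0 scaler0 meval0.
  rewrite mevalZ mevalM mevalXU mevalZ mevalM mevalXU eval_prodX2.
  have -> : (h :\ b) :\ c = h :\ b :\ c by [].
  have -> : (2 : C) * (p b * (2 * (p c * \prod_(j in h :\ b :\ c) sq p j))) =
            4 * p b * p c * \prod_(j in h :\ b :\ c) sq p j.
    by ring.
  by [].
rewrite (@shiftsumT C n b i (fun h' => if c \in h' then 4 * p b * p c * \prod_(j in h' :\ c) sq p j else 0)).
case: (i : nat) => [|i'] /=.
  rewrite big1 ?mulr0 // => h /andP[_]; rewrite cards_eq0 => /eqP ->.
  by rewrite in_set0.
rewrite /es mulr_sumr -shiftsum; last by rewrite !inE eq_sym.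
by apply: eq_bigr => h _; case: ifP.
Qed.

End Deriv2.

Ltac splitq := rewrite ?eqxx /=; try match goal with |- context [(?x == ?y)] =>
   case: (eqVneq x y) => [?|?]; [subst|]; splitq end.

Section Gam.
Variables (C : numClosedFieldType) (n : nat).
Implicit Types (A h : {set 'I_n}) (p : 'I_n -> C).

Local Notation mu := ((n.-1)%:R^-1 : C).

Lemma eval_dg p (b l c : 'I_n) : (mderiv b (gdown C l c)).@[p] =
  (mu - (l == c)%:R) * ((l == b)%:R * p c + p l * (c == b)%:R).
Proof.
rewrite /gdown mderivZ mderivM !mderivXi mevalZ mevalD !mevalM !mevalXU.
by rewrite !rmorph_nat.
Qed.

Lemma sum_dl (a : 'I_n) (F : 'I_n -> C) : \sum_(l < n) (a == l)%:R * F l = F a.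
Proof.
rewrite (bigD1 a) //= eqxx mul1r big1 ?addr0 // => l.
by rewrite eq_sym => /negbTE ->; rewrite mul0r.
Qed.

Lemma sum_dr (a : 'I_n) (F : 'I_n -> C) : \sum_(l < n) (l == a)%:R * F l = F a.
Proof. by rewrite -(sum_dl a F); apply: eq_bigr => l _; rewrite eq_sym. Qed.

Lemma GammaP_eq p (a b c : 'I_n) : (forall a, p a != 0) -> (2 <= n)%N ->
  GammaP p a b c = (a == b)%:R * (a == c)%:R / p a.
Proof.
move=> hp hn.
have hn1 : (n.-1)%:R != 0 :> C by rewrite pnatr_eq0; case: n hn => [|[|]].
have hmu : (n.-1)%:R * mu = 1 by rewrite mulfV.
rewrite /GammaP.
rewrite (eq_bigr (fun l => (b == c)%:R / p a *
   (2 * ((mu - (l == b)%:R) - (a == l)%:R * mu + (a == l)%:R * (l == b)%:R)))); last first.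
  move=> l _; rewrite !eval_dg /gup.
  splitq; try (match goal with H : is_true (?z != ?z) |- _ => by rewrite eqxx in H end).
  all: try (field; by rewrite ?hn1 ?hp).
have s1 : \sum_(i < n) (i == b)%:R = 1 :> C.
  by rewrite (eq_bigr (fun i => (i == b)%:R * 1)) ?sum_dr // => i _; rewrite mulr1.
have s2 : \sum_(i < n) (a == i)%:R * mu = mu by rewrite sum_dl.
have s3 : \sum_(i < n) (a == i)%:R * (i == b)%:R = (a == b)%:R :> C by rewrite sum_dl.
have s4 : \sum_(i < n) mu = (n.-1)%:R * mu + mu.
  rewrite sumr_const card_ord.
  have hn0 : (0 < n)%N by apply: leq_trans hn.
  by rewrite -[in LHS](prednK hn0) mulrSr mulr_natl.
rewrite -mulr_sumr -mulr_sumr big_split sumrB sumrB /= s1 s2 s3 s4 hmu.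
splitq; try (match goal with H : is_true (?z != ?z) |- _ => by rewrite eqxx in H end).
all: field; by rewrite ?hn1 ?hp.
Qed.

End Gam.

Section FB.
Variables (C : numClosedFieldType) (n : nat).
Implicit Types (A h : {set 'I_n}) (p : 'I_n -> C).

Definition ff p (c : 'I_n) (k : nat) : C := es (sq p) [set~ c] k.
Definition ee p (k : nat) : C := es (sq p) setT k.

Definition emp (m : nat) : {mpoly C[n]} :=
  if m is m'.+1 then (match insub m' with Some i => 'X_i | None => 0 end) else 1.

Definition mw (mo : 'X_{1..n}) : nat := (\sum_(t < n) t.+1 * mo t)%N.

Lemma mwD m1 m2 : mw (m1 + m2)%MM = (mw m1 + mw m2)%N.
Proof. by rewrite /mw -big_split /=; apply: eq_bigr => t _; rewrite mnmDE mulnDr. Qed.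

Lemma mw0 : mw 0%MM = 0%N.
Proof. by rewrite /mw big1 // => t _; rewrite mnm0E muln0. Qed.

Lemma emp_eval p m : (emp m).@[uval p] = ee p m.
Proof.
rewrite /ee; case: m => [|m] /=; first by rewrite meval1 es0.
case: insubP => [i _ vi|hn]; first by rewrite mevalXU uval_es vi.
rewrite meval0 es_big // cardsT card_ord ltnS.
by rewrite leqNgt.
Qed.

Lemma emp_wt m mo : mo \in msupp (emp m) -> (mw mo <= m)%N.
Proof.
case: m => [|m] /=; first by rewrite msupp1 inE => /eqP ->; rewrite mw0.
case: insubP => [i _ vi|hn]; last by rewrite msupp0.
rewrite msuppX inE => /eqP ->.
rewrite /mw (bigD1 i) //= mnm1E eqxx muln1 big1 ?addn0 ?vi //.
by move=> t /negbTE; rewrite mnm1E eq_sym => ->; rewrite muln0.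
Qed.

Definition FB (v : ('I_n -> C) -> 'I_n -> C) (D : nat) : Prop :=
  exists P : nat -> {mpoly C[n]},
    (forall k mo, mo \in msupp (P k) -> (mw mo + k <= D)%N) /\
    (forall p c, v p c = \sum_(k < n) (P k).@[uval p] * ff p c k).

Lemma FB_ext v w D : (forall p c, v p c = w p c) -> FB v D -> FB w D.
Proof. by move=> e [P [h1 h2]]; exists P; split=> // p c; rewrite -e. Qed.

Lemma FB_le v D D' : (D <= D')%N -> FB v D -> FB v D'.
Proof.
move=> le [P [h1 h2]]; exists P; split=> // k mo hm.
exact: leq_trans (h1 _ _ hm) le.
Qed.

Lemma FB0 D : FB (fun _ _ => 0) D.
Proof.
exists (fun _ => 0); split; first by move=> k mo; rewrite msupp0.
by move=> p c; rewrite big1 // => k _; rewrite meval0 mul0r.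
Qed.

Lemma FB_add v w D : FB v D -> FB w D -> FB (fun p c => v p c + w p c) D.
Proof.
move=> [P [h1 h2]] [Q [g1 g2]]; exists (fun k => P k + Q k); split.
  by move=> k mo /msuppD_le; rewrite mem_cat => /orP[/h1|/g1].
by move=> p c; rewrite h2 g2 -big_split /=; apply: eq_bigr => k _; rewrite mevalD mulrDl.
Qed.

Lemma FB_scal a v D : FB v D -> FB (fun p c => a * v p c) D.
Proof.
move=> [P [h1 h2]]; exists (fun k => a *: P k); split.
  by move=> k mo /msuppZ_le /h1.
by move=> p c; rewrite h2 mulr_sumr; apply: eq_bigr => k _; rewrite mevalZ mulrA.
Qed.

Lemma FB_opp v D : FB v D -> FB (fun p c => - v p c) D.
Proof. by move=> h; apply: FB_ext (FB_scal (-1) h) => p c; rewrite mulN1r. Qed.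

Lemma FB_sub v w D : FB v D -> FB w D -> FB (fun p c => v p c - w p c) D.
Proof. by move=> h1 h2; apply: FB_add h1 (FB_opp h2). Qed.

Lemma FB_sum (r : seq 'I_n) (F : 'I_n -> ('I_n -> C) -> 'I_n -> C) D :
  (forall k, FB (F k) D) -> FB (fun p c => \sum_(k <- r) F k p c) D.
Proof.
move=> hF; elim: r => [|k r ih].
  by apply: FB_ext (FB0 D) => p c; rewrite big_nil.
by apply: FB_ext (FB_add (hF k) ih) => p c; rewrite big_cons.
Qed.

Lemma ff_big p c k : (n <= k)%N -> ff p c k = 0.
Proof.
move=> hk; rewrite /ff es_big // cardsC1 card_ord.
have := ltn_ord c; lia.
Qed.

Lemma ff0 p c : ff p c 0 = 1.
Proof. exact: es0. Qed.

Lemma FB_basic (Q : {mpoly C[n]}) k D :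
  (forall mo, mo \in msupp Q -> (mw mo + k <= D)%N) ->
  FB (fun p c => Q.@[uval p] * ff p c k) D.
Proof.
move=> hQ; case: (ltnP k n) => hk; last first.
  by apply: FB_ext (FB0 D) => p c; rewrite ff_big // mulr0.
exists (fun j => if j == k then Q else 0); split.
  by move=> j mo; case: eqP => [->|_]; [apply: hQ | rewrite msupp0].
move=> p c; rewrite (bigD1 (Ordinal hk)) //= eqxx big1 ?addr0 //.
by move=> j /negbTE; rewrite -val_eqE /= => ->; rewrite meval0 mul0r.
Qed.

Lemma FB_f k : FB (fun p c => ff p c k) k.
Proof.
apply: FB_ext (@FB_basic 1 k k _) => [p c|mo]; first by rewrite meval1 mul1r.
by rewrite msupp1 inE => /eqP ->; rewrite mw0.
Qed.

Lemma msuppM_ex (P Q : {mpoly C[n]}) mo : mo \in msupp (P * Q) ->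
  exists m1 m2, [/\ m1 \in msupp P, m2 \in msupp Q & mo = (m1 + m2)%MM].
Proof.
by move=> /msuppM_le /allpairsP [[m1 m2] /= [h1 h2 ->]]; exists m1, m2.
Qed.

Lemma FB_emul m v D : FB v D -> FB (fun p c => ee p m * v p c) (D + m).
Proof.
move=> [P [h1 h2]]; exists (fun k => emp m * P k); split.
  move=> k mo /msuppM_ex [m1 [m2 [hm1 hm2 ->]]].
  rewrite mwD -addnA addnC leq_add //; [exact: h1 hm2 | exact: emp_wt hm1].
by move=> p c; rewrite h2 mulr_sumr; apply: eq_bigr => k _; rewrite mevalM emp_eval mulrA.
Qed.

Lemma xf p c k : sq p c * ff p c k = ee p k.+1 - ff p c k.+1.
Proof.
rewrite /ee /ff (esD1 _ _ (in_setT c)) setTD.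
by rewrite addrC addKr.
Qed.

Lemma FB_xmul v D : FB v D -> FB (fun p c => sq p c * v p c) D.+1.
Proof.
move=> [P [h1 h2]].
have e : forall p c, sq p c * v p c = \sum_(k <- index_enum 'I_n)
   ((fun k p c => (emp k.+1 * P k).@[uval p] * ff p c 0 - (P k).@[uval p] * ff p c k.+1) k p c).
  move=> p c; rewrite h2 mulr_sumr; apply: eq_bigr => k _; cbv beta.
  rewrite ff0 mulr1 mevalM emp_eval mulrCA xf mulrBr; congr (_ - _); exact: mulrC.
apply: FB_ext (FB_sum _ _) => [p c|k]; first by rewrite e.
apply: FB_sub; apply: FB_basic => mo.
  rewrite addn0 => /msuppM_ex [m1 [m2 [hm1 hm2 ->]]].
  have := emp_wt hm1; have := h1 _ _ hm2; rewrite mwD; lia.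
by move=> /h1; rewrite addnS ltnS.
Qed.

End FB.

Section WV.
Variables (C : numClosedFieldType) (n : nat).
Implicit Types (A h : {set 'I_n}) (p : 'I_n -> C).

Lemma FB_fmul a v D : FB v D -> FB (fun p c => ff p c a * v p c) (D + a).
Proof.
move=> hv; elim: a => [|a ih].
  by rewrite addn0; apply: FB_ext hv => p c; rewrite ff0 mul1r.
have h2 := FB_xmul ih; rewrite -addnS in h2.
have h := FB_sub (FB_emul a.+1 hv) h2.
apply: FB_ext h => p c.
have e : ff p c a.+1 = ee p a.+1 - sq p c * ff p c a by rewrite xf opprB addrC subrK.
by rewrite e mulrBl mulrA.
Qed.

Definition W (s b0 : nat) p (c : 'I_n) : C :=
  \sum_(b in [set~ c]) es (sq p) [set~ b] s * es (sq p) ([set~ c] :\ b) b0.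

Lemma esST (x : 'I_n -> C) k :
  \sum_(a < n) es x [set~ a] k = (n - k)%:R * es x setT k.
Proof.
have E := esS x setT k; rewrite cardsT card_ord in E.
transitivity (\sum_(a in [set: 'I_n]) es x ([set: 'I_n] :\ a) k); last exact: E.
apply: eq_big => [a|a _]; first by rewrite inE.
by congr es; apply/setP => y; rewrite !inE andbT.
Qed.

Lemma sumEb p (c : 'I_n) s :
  \sum_(b in [set~ c]) es (sq p) [set~ b] s = (n - s)%:R * ee p s - ff p c s.
Proof.
have E := esST (sq p) s; rewrite (bigD1 c) //= in E.
rewrite /ee /ff -E addrC addrK; apply: eq_bigl => b.
by rewrite !inE.
Qed.

Lemma sumEbc p (c : 'I_n) b0 :
  \sum_(b in [set~ c]) es (sq p) ([set~ c] :\ b) b0 = (n.-1 - b0)%:R * ff p c b0.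
Proof. by rewrite esS cardsC1 card_ord. Qed.

Lemma W0 b0 p c : W 0 b0 p c = (n.-1 - b0)%:R * ff p c b0.
Proof.
by rewrite /W -sumEbc; apply: eq_bigr => b _; rewrite es0 mul1r.
Qed.

Lemma W_rec s b0 p c : W s.+1 b0 p c =
  (n.-1 - b0)%:R * (ee p s.+1 * ff p c b0) - (n - s)%:R * (ee p s * ff p c b0.+1)
  + ff p c s * ff p c b0.+1 + W s b0.+1 p c.
Proof.
rewrite /W (eq_bigr (fun b => ee p s.+1 * es (sq p) ([set~ c] :\ b) b0
   - ff p c b0.+1 * es (sq p) [set~ b] s
   + es (sq p) [set~ b] s * es (sq p) ([set~ c] :\ b) b0.+1)); last first.
  move=> b hb.
  have e1 := esD1 (sq p) s (in_setT b); rewrite setTD in e1.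
  have e2 := esD1 (sq p) b0 hb.
  have -> : es (sq p) [set~ b] s.+1 = ee p s.+1 - sq p b * es (sq p) [set~ b] s.
    by rewrite /ee e1 addrK.
  rewrite /ff e2; ring.
rewrite big_split sumrB /= -!mulr_sumr sumEbc sumEb /=; ring.
Qed.

Lemma FB_W s b0 : FB (W s b0) (s + b0).
Proof.
elim: s b0 => [|s ih] b0.
  by apply: FB_ext (FB_scal _ (FB_f C n b0)) => p c; rewrite W0.
have h1 := FB_scal (n.-1 - b0)%:R (FB_emul s.+1 (FB_f C n b0)).
have h2 := FB_scal (n - s)%:R (FB_emul s (FB_f C n b0.+1)).
have h3 := FB_fmul s (FB_f C n b0.+1).
have h4 := ih b0.+1.
have k1 := FB_le (_ : (b0 + s.+1 <= s.+1 + b0)%N) h1.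
have k2 := FB_le (_ : (b0.+1 + s <= s.+1 + b0)%N) h2.
have k3 := FB_le (_ : (b0.+1 + s <= s.+1 + b0)%N) h3.
have k4 := FB_le (_ : (s + b0.+1 <= s.+1 + b0)%N) h4.
have := FB_add (FB_add (FB_sub (k1 ltac:(lia)) (k2 ltac:(lia))) (k3 ltac:(lia))) (k4 ltac:(lia)).
by apply: FB_ext => p c; rewrite W_rec.
Qed.

Definition V (s b0 : nat) p (c : 'I_n) : C :=
  \sum_(b in [set~ c]) (\sum_(a in [set~ b]) es (sq p) [set~ a] s)
     * es (sq p) ([set~ c] :\ b) b0.

Lemma FB_V s b0 : FB (V s b0) (s + b0).
Proof.
have h1 := FB_scal ((n - s)%:R * (n.-1 - b0)%:R) (FB_emul s (FB_f C n b0)).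
have k1 := FB_le (_ : (b0 + s <= s + b0)%N) h1.
have := FB_sub (k1 ltac:(lia)) (FB_W s b0).
apply: FB_ext => p c.
rewrite /V /W [in RHS](eq_bigr (fun b => (n - s)%:R * ee p s * es (sq p) ([set~ c] :\ b) b0
   - es (sq p) [set~ b] s * es (sq p) ([set~ c] :\ b) b0)); last first.
  by move=> b _; rewrite sumEb mulrBl.
rewrite sumrB -mulr_sumr sumEbc; ring.
Qed.

End WV.

Section Main.
Variables (C : numClosedFieldType) (n : nat).
Implicit Types (A h : {set 'I_n}) (p : 'I_n -> C).

Lemma jacE p (m a : 'I_n) : jacU p m a = 2 * p a * es (sq p) [set~ a] m.
Proof. by rewrite /jacU mxE eval_d1. Qed.

Lemma A_eq p (i b c : 'I_n) : (forall a, p a != 0) -> (2 <= n)%N ->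
  (\sum_(a < n) jacU p i a * GammaP p a b c) - (mderiv c (mderiv b (uinv C i))).@[p]
  = if b == c then 0 else - (4 * p b * p c * esm1 (sq p) ([set~ b] :\ c) i).
Proof.
move=> hp hn.
rewrite (eq_bigr (fun a => (a == b)%:R * ((a == c)%:R * (2 * es (sq p) [set~ a] i)))); last first.
  move=> a _; rewrite jacE GammaP_eq //; have := hp a => pa; field; exact: pa.
rewrite sum_dr eval_d2; case: (eqVneq b c) => [->|nbc]; first by rewrite mul1r subrr.
by rewrite mul0r sub0r.
Qed.

Lemma JG_eq p (s b : 'I_n) : (forall a, p a != 0) ->
  \sum_(a < n) jacU p s a * gup p a b = 2 / p b * \sum_(a in [set~ b]) es (sq p) [set~ a] s.
Proof.
move=> hp; rewrite (bigD1 b) //= /gup eqxx subrr mul0r mulr0 add0r mulr_sumr.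
apply: eq_big => [a|a]; first by rewrite !inE.
move=> nab; rewrite (negbTE nab) subr0 jacE.
have := hp a => pa; have := hp b => pb; field.
by rewrite pa pb.
Qed.

Lemma mulmx_entry (A B : 'M[C]_n) (i k : 'I_n) : (A *m B) i k = \sum_(j < n) A i j * B j k.
Proof. by rewrite mxE. Qed.

Lemma GUC_mat p (s i k : 'I_n) : jacU p \in unitmx ->
  GammaUcontra p s i k = - ((jacU p *m (\matrix_(a, b) gup p a b) *m
     (\matrix_(b, c) ((\sum_(a < n) jacU p i a * GammaP p a b c)
                      - (mderiv c (mderiv b (uinv C i))).@[p])))
     *m invmx (jacU p)) s k.
Proof.
move=> hJ.
set J := jacU p; set G := \matrix_(a, b) gup p a b.
set Am := \matrix_(b, c) _; set D := invmx J.
have e1 : forall j, gupU p s j = (J *m G *m J^T) s j.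
  move=> j; rewrite /gupU mulmx_entry.
  under [RHS]eq_bigr => b _ do rewrite mulmx_entry mulr_suml.
  rewrite [RHS]exchange_big; apply: eq_bigr => a _; apply: eq_bigr => b _.
  by rewrite !mxE.
have e2 : forall j, GammaU p i j k = (D^T *m Am *m D) j k.
  move=> j; rewrite /GammaU mulmx_entry.
  under [RHS]eq_bigr => c _ do rewrite mulmx_entry mulr_suml.
  rewrite [RHS]exchange_big; apply: eq_bigr => b _; apply: eq_bigr => c _.
  rewrite !mxE /dpdu -/J -/D; ring.
rewrite /GammaUcontra (eq_bigr (fun j => (J *m G *m J^T) s j * (D^T *m Am *m D) j k)); last first.
  by move=> j _; rewrite e1 e2.
rewrite -mulmx_entry.
have -> : J *m G *m J^T *m (D^T *m Am *m D) = J *m G *m Am *m D.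
  rewrite -!mulmxA [J^T *m (D^T *m _)]mulmxA -trmx_mul mulVmx // trmx1 mul1mx.
  by rewrite !mulmxA.
by [].
Qed.

Definition Vm (s i : nat) p (c : 'I_n) : C :=
  \sum_(b in [set~ c]) (\sum_(a in [set~ b]) es (sq p) [set~ a] s)
     * esm1 (sq p) ([set~ c] :\ b) i.

Lemma FB_Vm (s i : nat) : FB (Vm s i) (s + i.-1).
Proof.
case: i => [|i].
  by apply: FB_ext (FB0 _ _ _) => p c; rewrite /Vm big1 // => b _; rewrite mulr0.
by apply: FB_ext (FB_V C n s i) => p c.
Qed.

Lemma main_p p (s i k : 'I_n) (Q : nat -> {mpoly C[n]}) :
  generic_point p -> (2 <= n)%N ->
  (forall p c, Vm s i p c = \sum_(m < n) (Q m).@[uval p] * ff p c m) ->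
  GammaUcontra p s i k = (4 *: Q k).@[uval p].
Proof.
move=> [hp hJ] hn hV; rewrite GUC_mat //.
set J := jacU p; set G := \matrix_(a, b) gup p a b.
set Am := \matrix_(b, c) _; set D := invmx J.
have row : forall c, (J *m G *m Am) s c = - \sum_(m < n) (4 *: Q m).@[uval p] * J m c.
  move=> c; rewrite mulmx_entry.
  have JGe : forall b, (J *m G) s b = 2 / p b * \sum_(a in [set~ b]) es (sq p) [set~ a] s.
    by move=> b; rewrite -(JG_eq s b hp) mulmx_entry; apply: eq_bigr => a _; rewrite /G mxE.
  have Ame : forall b, Am b c = if b == c then 0
       else - (4 * p b * p c * esm1 (sq p) ([set~ b] :\ c) i).
    by move=> b; rewrite /Am mxE -A_eq.
  under eq_bigr => b _ do rewrite JGe Ame.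
  rewrite (bigD1 c) //= eqxx mulr0 add0r.
  transitivity (- (8 * p c) * Vm s i p c).
    rewrite /Vm mulr_sumr; apply: eq_big => [b|b nbc]; first by rewrite !inE.
    rewrite (negbTE nbc).
    have -> : [set~ b] :\ c = [set~ c] :\ b by apply/setP => y; rewrite !inE andbC.
    have := hp b => pb; field; exact: pb.
  rewrite hV mulr_sumr -sumrN; apply: eq_bigr => m _.
  rewrite mevalZ jacE /ff; ring.
rewrite mulmx_entry.
under eq_bigr => c _ do rewrite row mulNr.
rewrite sumrN opprK.
under eq_bigr => c _ do rewrite mulr_suml.
rewrite exchange_big /=.
under eq_bigr => m _ do (under eq_bigr => c _ do rewrite -mulrA).
under eq_bigr => m _ do rewrite -mulr_sumr -mulmx_entry mulmxV // mxE.
rewrite (bigD1 k) //= eqxx mulr1n mulr1 big1 ?addr0 // => m /negbTE ->.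
by rewrite mulr0n mulr0.
Qed.

End Main.

Unset Implicit Arguments.

Theorem mainTheorem12 (C : numClosedFieldType) (n : nat) (hn : (2 <= n)%N)
    (j : 'I_n) (hj : j.+2 = n) (s i k : 'I_n) :
  exists P : {mpoly C[n]},
    (forall m : 'X_{1..n}, m \in msupp P -> (m j <= 1)%N) /\
    (forall p : 'I_n -> C, generic_point p ->
       GammaUcontra p s i k = P.@[uval p]).
Proof.
have [Q [hQ hV]] := FB_Vm C n s i.
exists (4 *: Q k); split; last by move=> p hg; apply: main_p.
move=> mo /msuppZ_le /hQ hw.
have hj' : (j.+1 * mo j <= mw mo)%N by rewrite /mw (bigD1 j) //= leq_addr.
have := ltn_ord s; have := ltn_ord i; have := ltn_ord k.
move: hw hj' hj; clear; nia.
Qed.
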